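(* Let $L$ be a finite lattice with exactly two coatoms and $U$ a finite lattice with exactly two atoms. Then any vertical 2-sum $L +_2 U$ of $L$ and $U$ is a lattice.
   Context: Let $L' = L \setminus \{\top_L\}$ and $U' = U \setminus \{\bot_U\}$, where $\top_L$ is the top of $L$ and $\bot_U$ the bottom of $U$. A vertical 2-sum $L +_2 U$ is the poset obtained from the disjoint union of $L'$ and $U'$ by identifying the two coatoms of $L$ with the two atoms of $U$ via some bijection; the order is the one generated by the orders of $L'$ and $U'$, i.e. $x \le y$ iff $x,y \in L'$ and $x \le_L y$, or $x,y \in U'$ and $x \le_U y$, or $x \in L'$, $y \in U'$ and there is an identified element $c$ with $x \le_L c$ and $c \le_U y$. *)

(* Defs.v *)
From mathcomp Require Import all_boot all_order.
Set Implicit Arguments. Unset Strict Implicit. Unset Printing Implicit Defensive.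
Import Order.Theory.
Local Open Scope order_scope.

Definition coatom (d : Order.disp_t) (L : finTBLatticeType d) (c : L) : bool :=
  (c < \top) && [forall x : L, ~~ ((c < x) && (x < \top))].

Definition atom (d : Order.disp_t) (U : finTBLatticeType d) (a : U) : bool :=
  (\bot < a) && [forall x : U, ~~ ((\bot < x) && (x < a))].

Section TwoSum.
Variables (d1 d2 : Order.disp_t) (L : finTBLatticeType d1) (U : finTBLatticeType d2).
Variable f : L -> U. (* the identification coatoms of L -> atoms of U *)

(* Carrier of L +_2 U, inside L + U:  inl x for x in L' = L \ {top}
   (coatoms c of L stand for the identified element c = f c),
   inr y for y in U' = U \ {bot} that is not an atom (atoms are already
   represented by the coatoms of L they are identified with). *)
Definition vs_carrier (z : L + U) : bool :=
  match z with
  | inl x => x != \top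
  | inr y => (y != \bot) && ~~ atom y
  end.

Definition vs_inL (z : L + U) : option L :=
  match z with inl x => Some x | inr _ => None end.

Definition vs_inU (z : L + U) : option U :=
  match z with
  | inl x => if coatom x then Some (f x) else None
  | inr y => Some y
  end.

(* the order generated by the orders of L' and U' *)
Definition vs_le (z w : L + U) : Prop :=
  (exists x y, vs_inL z = Some x /\ vs_inL w = Some y /\ x <= y)
  \/ (exists x y, vs_inU z = Some x /\ vs_inU w = Some y /\ x <= y)
  \/ (exists x y, vs_inL z = Some x /\ vs_inU w = Some y /\
        exists c : L, coatom c /\ x <= c /\ f c <= y).
End TwoSum.

Definition is_lattice (T : Type) (A : T -> bool) (le : T -> T -> Prop) : Prop :=
  (forall x, A x -> le x x)
  /\ (forall x y, A x -> A y -> le x y -> le y x -> x = y)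
  /\ (forall x y z, A x -> A y -> A z -> le x y -> le y z -> le x z)
  /\ (forall x y, A x -> A y ->
        exists j, A j /\ le x j /\ le y j /\
          forall u, A u -> le x u -> le y u -> le j u)
  /\ (forall x y, A x -> A y ->
        exists m, A m /\ le m x /\ le m y /\
          forall u, A u -> le u x -> le u y -> le u m).

(* Main.v *)
Require Import Defs.
From mathcomp Require Import all_boot all_order.
Import Order.Theory.
Local Open Scope order_scope.

Lemma fin_max (T : finType) (r : rel T) (P : pred T) :
  (forall x y z, r x y -> r y z -> r x z) -> (forall x, ~~ r x x) ->
  forall x, P x -> exists y, [/\ P y, (x == y) || r x y & forall z, P z -> ~~ r y z].
Proof.
move=> tr irr.
suff H : forall n x, (#|[pred z | P z && r x z]| <= n)%N -> P x ->
  exists y, [/\ P y, (x == y) || r x y & forall z, P z -> ~~ r y z].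
  by move=> x; apply: H (leqnn _).
elim=> [|n IH] x hc Px; (case: (boolP [exists z, P z && r x z]) =>
   [/existsP [z /andP [Pz lxz]] | /existsPn hn];
  last by exists x; split => //; [rewrite eqxx | move=> z Pz; move: (hn z); rewrite Pz]).
- suff: (0 < #|[pred z | P z && r x z]|)%N by rewrite ltnNge hc.
  by apply/card_gt0P; exists z; rewrite inE Pz lxz.
- have lt_card : (#|[pred w | P w && r z w]| < #|[pred w | P w && r x w]|)%N.
    apply: proper_card; apply/properP; split.
    + apply/subsetP => w; rewrite !inE => /andP [Pw lzw]; by rewrite Pw (tr _ _ _ lxz lzw).
    + by exists z; rewrite !inE ?Pz ?lxz // (negbTE (irr z)) andbF.
  have [|y [Py hzy hy]] := IH z _ Pz.
    by rewrite -ltnS; exact: leq_trans lt_card hc.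
  exists y; split=> //; apply/orP; right; case/orP: hzy => [/eqP <- // | ]; exact: tr.
Qed.

Lemma below_coatom d (L : finTBLatticeType d) (x : L) : x != \top ->
  exists2 c, coatom c & x <= c.
Proof.
move=> hx.
have [|y [Py hxy hy]] := @fin_max L (fun a b => a < b) (fun z => z < \top)
  (fun a b c => @lt_trans _ _ b a c) (fun z => negbT (ltxx z)) x.
  by rewrite lt_neqAle hx lex1.
exists y.
  rewrite /coatom Py /=; apply/forallP => z; apply/negP => /andP [h1 h2].
  by move: (hy z h2); rewrite h1.
by case/orP: hxy => [/eqP -> // | /ltW].
Qed.

Lemma above_atom d (U : finTBLatticeType d) (x : U) : x != \bot ->
  exists2 c, atom c & c <= x.
Proof.
move=> hx.
have [|y [Py hxy hy]] := @fin_max U (fun a b => b < a) (fun z => \bot < z)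
  (fun a b c h1 h2 => @lt_trans _ _ b c a h2 h1) (fun z => negbT (ltxx z)) x.
  by rewrite lt_def hx le0x.
exists y.
  rewrite /atom Py /=; apply/forallP => z; apply/negP => /andP [h1 h2].
  by move: (hy z h1); rewrite h2.
by case/orP: hxy => [/eqP -> // | /ltW].
Qed.

Lemma atom_le d (U : finTBLatticeType d) (a y : U) : atom a -> y <= a ->
  y = \bot \/ y = a.
Proof.
move=> /andP [_ /forallP H] ya.
case: (eqVneq y a) => [-> | ya']; [by right | left].
move: (H y); rewrite (lt_neqAle y a) ya' ya andbT lt_def le0x andbT.
by rewrite andbT => /negPn/eqP.
Qed.

Lemma atom_ne0 d (U : finTBLatticeType d) (a : U) : atom a -> a != \bot.
Proof. by case/andP; rewrite lt_def => /andP []. Qed.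

Lemma coatom_ne1 d (L : finTBLatticeType d) (a : L) : coatom a -> a != \top.
Proof. by case/andP; rewrite lt_neqAle => /andP []. Qed.

Lemma is_lattice_ext T (A : T -> bool) (le1 le2 : T -> T -> Prop) :
  (forall x y, A x -> A y -> (le1 x y <-> le2 x y)) -> is_lattice A le2 -> is_lattice A le1.
Proof.
move=> E [r [a [t [j m]]]]; split; [|split; [|split; [|split]]].
- by move=> x Ax; apply/(E x x Ax Ax); exact: r.
- by move=> x y Ax Ay /(E _ _ Ax Ay) h1 /(E _ _ Ay Ax) h2; exact: a.
- move=> x y z Ax Ay Az /(E _ _ Ax Ay) h1 /(E _ _ Ay Az) h2; apply/(E _ _ Ax Az); exact: t h1 h2.
- move=> x y Ax Ay; have [j0 [Aj [h1 [h2 h3]]]] := j x y Ax Ay; exists j0; split=> //.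
  split; first exact/(E _ _ Ax Aj).
  split; first exact/(E _ _ Ay Aj).
  move=> u Au /(E _ _ Ax Au) hx /(E _ _ Ay Au) hy; apply/(E _ _ Aj Au); exact: h3.
- move=> x y Ax Ay; have [j0 [Aj [h1 [h2 h3]]]] := m x y Ax Ay; exists j0; split=> //.
  split; first exact/(E _ _ Aj Ax).
  split; first exact/(E _ _ Aj Ay).
  move=> u Au /(E _ _ Au Ax) hx /(E _ _ Au Ay) hy; apply/(E _ _ Au Aj); exact: h3.
Qed.

Definition vsR d1 d2 (L : finTBLatticeType d1) (U : finTBLatticeType d2) (f : L -> U)
  (c1 c2 : L) (z w : L + U) : bool :=
  match z, w with
  | inl x, inl y => x <= y
  | inr y, inr y' => y <= y'
  | inl x, inr y => (x <= c1) && (f c1 <= y) || (x <= c2) && (f c2 <= y)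
  | inr _, inl _ => false
  end.
Arguments atom_le {d U a y}.
Arguments atom_ne0 {d U a}.
Arguments coatom_ne1 {d L a}.
Arguments below_coatom {d L x}.
Arguments above_atom {d U x}.
Arguments vsR {d1 d2 L U}.

Theorem lemma3p3 (d1 d2 : Order.disp_t)
  (L : finTBLatticeType d1) (U : finTBLatticeType d2) (f : L -> U) :
  #|[pred c : L | coatom c]| = 2 ->
  #|[pred a : U | atom a]| = 2 ->
  (forall c : L, coatom c -> atom (f c)) ->
  {in [pred c : L | coatom c] &, injective f} ->
  (forall a : U, atom a -> exists2 c : L, coatom c & f c = a) ->
  is_lattice (vs_carrier (L := L) (U := U)) (vs_le f).
Proof.
move=> cardC _ fat finj fsurj.
move: cardC; rewrite cardE.
case E: (enum [pred c : L | coatom c]) => [|c1 [|c2 [|]]] //= _.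
have Ceq : forall c, coatom c = (c == c1) || (c == c2).
  move=> c; have -> : (c == c1) || (c == c2) = (c \in [:: c1; c2]) by rewrite !inE.
  by rewrite -E mem_enum.
have c12 : c1 != c2.
  have : uniq [:: c1; c2] by rewrite -E enum_uniq.
  by rewrite /= inE andbT.
have co1 : coatom c1 by rewrite Ceq eqxx.
have co2 : coatom c2 by rewrite Ceq eqxx orbT.
have atomE : forall a, atom a = (a == f c1) || (a == f c2).
  move=> a; apply/idP/idP.
    by case/fsurj => c; rewrite Ceq => /orP [] /eqP -> <-; rewrite eqxx ?orbT.
  by case/orP => /eqP ->; apply: fat.
have fne : f c1 != f c2.
  by apply: contraNneq c12 => e; apply/eqP; apply: finj; rewrite // inE.
have at1 := fat _ co1; have at2 := fat _ co2.
have below : forall x : L, x != \top -> (x <= c1) || (x <= c2).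
  move=> x /below_coatom [c]; rewrite Ceq => /orP [] /eqP -> ->; by rewrite ?orbT.
have above : forall y : U, y != \bot -> (f c1 <= y) || (f c2 <= y).
  move=> y /above_atom [c]; rewrite atomE => /orP [] /eqP -> ->; by rewrite ?orbT.
have atom_eq : forall c c', coatom c -> coatom c' -> f c <= f c' -> c = c'.
  move=> c c' cc cc' /(atom_le (fat _ cc')) [].
    by move=> e; have := atom_ne0 (fat _ cc); rewrite e eqxx.
  by move/finj; apply.
have carE : forall z : L + U, vs_carrier z = match z with inl x => x != \top
     | inr y => [&& y != \bot, y != f c1 & y != f c2] end.
  by case=> [x|y] //=; rewrite ?atomE ?negb_or.
have char : forall z w : L + U, vs_carrier z -> vs_carrier w ->
    (vs_le f z w <-> vsR f c1 c2 z w).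
  move=> [x|y] [x'|y']; rewrite !carE /vs_le /vsR /= => hz hw; split.
  - case=> [[a [b [[<-] [[<-] //]]]] | [[a [b [e1 [e2 h]]]] | [a [b [[<-] [e2 hc]]]]]].
    + move: e1 e2 h; case: ifP => // cx [<-]; case: ifP => // cx' [<-] /(atom_eq _ _ cx cx') ->.
      exact: lexx.
    + move: hc => [c [cc [h1 h2]]]; move: e2 h2; case: ifP => // cx' [<-].
      by move=> /(atom_eq _ _ cc cx') e; rewrite -e.
  - by move=> h; left; exists x, x'.
  - case=> [[a [b [_ [? _]]]] // | [[a [b [e1 [[<-] h]]]] | [a [b [[<-] [[<-] [c [cc [h1 h2]]]]]]]]].
    + move: e1 h; case: ifP => // cx [<-] h.
      by rewrite Ceq in cx; case/orP: cx => /eqP ex; subst; rewrite lexx h ?orbT.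
    + by rewrite Ceq in cc; case/orP: cc => /eqP ec; subst c; rewrite h1 h2 ?orbT.
  - case/orP => /andP [h1 h2]; right; right; exists x, y'; do 2 split=> //.
    + by exists c1.
    + by exists c2.
  - case=> [[a [b [? _]]] // | [[a [b [[<-] [e2 h]]]] | [a [b [? _]]] //]].
    move: e2 h; case: ifP => // cx' [<-] h.
    case/and3P: hz => n0 n1 n2.
    case: (atom_le (fat _ cx') h) => e; first by rewrite e eqxx in n0.
    by move: (fat _ cx'); rewrite atomE -e (negbTE n1) (negbTE n2).
  - by [].
  - by case=> [[a [b [? _]]] // | [[a [b [[<-] [[<-] h]]]] | [a [b [? _]]] //]].
  - by move=> h; right; left; exists y, y'.

apply: (@is_lattice_ext _ _ _ (fun z w => vsR f c1 c2 z w) char).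
have n01 := atom_ne0 at1; have n02 := atom_ne0 at2.
have t1 := coatom_ne1 co1; have t2 := coatom_ne1 co2.
have upU : forall y w : U, y <= w -> [&& y != \bot, y != f c1 & y != f c2] ->
    [&& w != \bot, w != f c1 & w != f c2].
  move=> y w yw /and3P [n0 n1 n2]; apply/and3P; split.
  - by apply: contraNneq n0 => e; rewrite -lex0 -e.
  - apply: contraNneq n0 => e; move: yw; rewrite e => /(atom_le at1) [-> | e'].
      exact: eqxx.
    by rewrite e' eqxx in n1.
  - apply: contraNneq n0 => e; move: yw; rewrite e => /(atom_le at2) [-> | e'].
      exact: eqxx.
    by rewrite e' eqxx in n2.
have downL : forall x w : L, w <= x -> x != \top -> w != \top.
  by move=> x w wx hx; apply: contraNneq hx => e; rewrite -le1x -e.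
rewrite /is_lattice; split; [|split; [|split; [|split]]].
- by case=> [x|y] _; rewrite /vsR lexx.
- case=> [x|y] [x'|y'] _ _; rewrite /vsR // => h1 h2; f_equal; apply/le_anti; by rewrite h1 h2.
- case=> [x|y] [x'|y'] [x''|y''] _ _ _; rewrite /vsR // => h1 h2.
  + exact: le_trans h1 h2.
  + by case/orP: h2 => /andP [a b]; rewrite (le_trans h1 a) b ?orbT.
  + by case/orP: h1 => /andP [a b]; rewrite a (le_trans b h2) ?orbT.
  + exact: le_trans h1 h2.
- have J_ll : forall x y : L, x != \top -> y != \top -> exists j, vs_carrier j /\
      vsR f c1 c2 (inl x) j /\ vsR f c1 c2 (inl y) j /\ forall u, vs_carrier u ->
      vsR f c1 c2 (inl x) u -> vsR f c1 c2 (inl y) u -> vsR f c1 c2 j u.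
    move=> x y hx hy.
    case: (eqVneq (x `|` y) \top) => hxy.
    + exists (inr (f c1 `|` f c2)); rewrite carE /vsR; split; [|split; [|split]].
      * apply/and3P; split.
        -- by apply: contraNneq n01 => e; rewrite -lex0 -e leUl.
        -- apply/eqP => e; have : f c2 <= f c1 by rewrite -e leUr.
           case/(atom_le at1) => e'; [by rewrite e' eqxx in n02 | by rewrite e' eqxx in fne].
        -- apply/eqP => e; have : f c1 <= f c2 by rewrite -e leUl.
           case/(atom_le at2) => e'; [by rewrite e' eqxx in n01 | by rewrite e' eqxx in fne].
      * by case/orP: (below x hx) => ->; rewrite ?leUl ?leUr ?orbT.
      * by case/orP: (below y hy) => ->; rewrite ?leUl ?leUr ?orbT.
      * case=> [u|u]; rewrite carE /vsR => cu.
        -- move=> hxu hyu; have : \top <= u by rewrite -hxy leUx hxu hyu.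
           by rewrite le1x (negbTE cu).
        -- case/orP=> /andP [hx1 h1]; case/orP=> /andP [hy1 h1']; try by rewrite leUx h1 h1'.
           ++ by move: t1; rewrite -le1x -hxy leUx hx1 hy1.
           ++ by move: t2; rewrite -le1x -hxy leUx hx1 hy1.
    + exists (inl (x `|` y)); rewrite carE /vsR; split; [done|split; [exact: leUl|split; [exact: leUr|]]].
      case=> [u|u]; rewrite carE /vsR => cu.
      * by move=> h1 h2; rewrite leUx h1 h2.
      * case/orP=> /andP [hx1 h1]; case/orP=> /andP [hy1 h1'];
          try (by rewrite !leUx ?hx1 ?hy1 ?h1 ?orbT);
        move: (below _ hxy); case/orP => ->; by rewrite h1 h1' ?orbT.
  have J_lr : forall (x : L) (y : U), x != \top -> [&& y != \bot, y != f c1 & y != f c2] ->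
      exists j, vs_carrier j /\
      vsR f c1 c2 (inl x) j /\ vsR f c1 c2 (inr y) j /\ forall u, vs_carrier u ->
      vsR f c1 c2 (inl x) u -> vsR f c1 c2 (inr y) u -> vsR f c1 c2 j u.
    move=> x y hx hy; have n0y : y != \bot by case/and3P: hy.
    case: (boolP (vsR f c1 c2 (inl x) (inr y))) => hR.
    + exists (inr y); rewrite carE; split=> //; split=> //; split; first by rewrite /vsR lexx.
      by case=> [u|u] cu; rewrite /vsR.
    + case: (boolP (x <= c1)) => hx1.
      * exists (inr (y `|` f c1)); rewrite carE; split; first exact: upU (leUl _ _) hy.
        rewrite /vsR hx1 leUr leUl; split=> //; split=> //.
        case=> [u|u] cu; rewrite /vsR // => hxu hyu; rewrite leUx hyu /=.
        case/orP: hxu => /andP [hxc h] //.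
        by case/orP: (above y n0y) => hay; move: hR; rewrite /vsR hx1 hxc hay ?orbT.
      * have hx2 : x <= c2 by move: (below x hx); rewrite (negbTE hx1).
        exists (inr (y `|` f c2)); rewrite carE; split; first exact: upU (leUl _ _) hy.
        rewrite /vsR hx2 leUr leUl orbT; split=> //; split=> //.
        case=> [u|u] cu; rewrite /vsR // => hxu hyu; rewrite leUx hyu /=.
        case/orP: hxu => /andP [hxc h] //.
        by rewrite hxc in hx1.
  case=> [x|y] [x'|y']; rewrite !carE => hz hw.
  + exact: J_ll.
  + exact: J_lr.
  + have [j [cj [h1 [h2 h3]]]] := J_lr x' y hw hz; exists j; do 3?split=> //.
    by move=> u cu a b; exact: h3.
  + exists (inr (y `|` y')); rewrite carE; split; first exact: upU (leUl _ _) hz.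
    rewrite /vsR; split; [exact: leUl | split; [exact: leUr|]].
    by case=> [u|u] cu; rewrite /vsR // => a b; rewrite leUx a b.
- have M_lr : forall (x : L) (y : U), x != \top -> [&& y != \bot, y != f c1 & y != f c2] ->
      exists m, vs_carrier m /\
      vsR f c1 c2 m (inl x) /\ vsR f c1 c2 m (inr y) /\ forall u, vs_carrier u ->
      vsR f c1 c2 u (inl x) -> vsR f c1 c2 u (inr y) -> vsR f c1 c2 u m.
    move=> x y hx hy; have n0y : y != \bot by case/and3P: hy.
    case: (boolP (vsR f c1 c2 (inl x) (inr y))) => hR.
    + exists (inl x); rewrite carE; split=> //; split; first exact: lexx.
      split=> //.
    + case/orP: (above y n0y) => hay.
      * exists (inl (x `&` c1)); rewrite carE; split; first exact: downL (leIl _ _) hx.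
        rewrite /vsR leIl leIr hay; split=> //; split=> //.
        case=> [u|u] cu; rewrite /vsR // => a.
        case/orP => /andP [uc h]; first by rewrite lexI a uc.
        by case/orP: (below x hx) => hxc; move: hR; rewrite /vsR hxc hay h ?orbT.
      * exists (inl (x `&` c2)); rewrite carE; split; first exact: downL (leIl _ _) hx.
        rewrite /vsR leIl leIr hay orbT; split=> //; split=> //.
        case=> [u|u] cu; rewrite /vsR // => a.
        case/orP => /andP [uc h]; last by rewrite lexI a uc.
        by case/orP: (below x hx) => hxc; move: hR; rewrite /vsR hxc hay h ?orbT.
  have M_rr : forall (y y' : U), [&& y != \bot, y != f c1 & y != f c2] ->
      [&& y' != \bot, y' != f c1 & y' != f c2] ->
      exists m, vs_carrier m /\
      vsR f c1 c2 m (inr y) /\ vsR f c1 c2 m (inr y') /\ forall u, vs_carrier u ->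
      vsR f c1 c2 u (inr y) -> vsR f c1 c2 u (inr y') -> vsR f c1 c2 u m.
    move=> y y' hy hy'; have n0y : y != \bot by case/and3P: hy.
    have n0y' : y' != \bot by case/and3P: hy'.
    case: (boolP [&& y `&` y' != \bot, y `&` y' != f c1 & y `&` y' != f c2]) => cw.
    + exists (inr (y `&` y')); rewrite carE; split => //.
      rewrite /vsR; split; [exact: leIl | split; [exact: leIr|]].
      case=> [u|u] cu; rewrite /vsR.
      * have n0w : y `&` y' != \bot by case/and3P: cw.
        case/orP => /andP [a1 b1]; case/orP => /andP [a2 b2];
          try (by rewrite !lexI ?b1 ?b2 ?a1 ?orbT);
        case/orP: (above _ n0w) => h; by rewrite ?a1 ?a2 h ?orbT.
      * by move=> a b; rewrite lexI a b.
    + case: (eqVneq (y `&` y') \bot) => [w0 | n0w].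
      * exists (inl (c1 `&` c2)); rewrite carE; split; first exact: downL (leIl _ _) t1.
        split; first by case/orP: (above y n0y) => h; rewrite /vsR h ?leIl ?leIr ?orbT.
        split; first by case/orP: (above y' n0y') => h; rewrite /vsR h ?leIl ?leIr ?orbT.
        case=> [u|u] cu; rewrite /vsR.
        -- case/orP => /andP [a1 b1]; case/orP => /andP [a2 b2];
             try (by rewrite lexI ?a1 ?a2);
             [move: n01 | move: n02]; by rewrite -lex0 -w0 lexI b1 b2.
        -- move=> a b; have : u <= y `&` y' by rewrite lexI a b.
           by rewrite w0 lex0; move: cu; rewrite carE => /and3P [cu0 _ _]; rewrite (negbTE cu0).
      * have : (y `&` y' == f c1) || (y `&` y' == f c2).
          by move: cw; rewrite n0w /= negb_and !negbK.
        case/orP => /eqP wa.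
        -- exists (inl c1); rewrite carE; split=> //.
           rewrite /vsR lexx -wa leIl leIr; split=> //; split=> //.
           case=> [u|u] cu; rewrite /vsR.
           ++ case/orP => /andP [a1 b1]; case/orP => /andP [a2 b2]; try by [].
              have : f c2 <= f c1 by rewrite -wa lexI b1 b2.
              case/(atom_le at1) => e; [by rewrite e eqxx in n02 | by rewrite e eqxx in fne].
           ++ move=> a b; have : u <= f c1 by rewrite -wa lexI a b.
              by case/(atom_le at1) => e; move: cu; rewrite carE e eqxx /= ?andbF.
        -- exists (inl c2); rewrite carE; split=> //.
           rewrite /vsR lexx -wa leIl leIr /= !orbT; split=> //; split=> //.
           case=> [u|u] cu; rewrite /vsR.
           ++ case/orP => /andP [a1 b1]; case/orP => /andP [a2 b2]; try by [].
              have : f c1 <= f c2 by rewrite -wa lexI b1 b2.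
              case/(atom_le at2) => e; [by rewrite e eqxx in n01 | by rewrite e eqxx in fne].
           ++ move=> a b; have : u <= f c2 by rewrite -wa lexI a b.
              by case/(atom_le at2) => e; move: cu; rewrite carE e eqxx /= ?andbF.
  case=> [x|y] [x'|y']; rewrite !carE => hz hw.
  + exists (inl (x `&` x')); rewrite carE; split; first exact: downL (leIl _ _) hz.
    rewrite /vsR; split; [exact: leIl | split; [exact: leIr|]].
    by case=> [u|u] cu; rewrite /vsR // => a b; rewrite lexI a b.
  + exact: M_lr.
  + have [j [cj [h1 [h2 h3]]]] := M_lr x' y hw hz; exists j; do 3?split=> //.
    by move=> u cu a b; exact: h3.
  + exact: M_rr.
Qed.
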